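(* Let $k$ be a field and $G$ a finite group of order $n$ with $1/n\in k$, and assume $k$ contains the $n$-th roots of unity. Let $l$ be a field (not necessarily of the same characteristic) which contains the $n$-th roots of unity and with $1/n\in l$, and fix an isomorphism $\epsilon$ between the groups of $n$-th roots of unity in $k$ and in $l$. Let $\sigma\subseteq G$ be a cyclic subgroup. Then the $l$-algebra homomorphism $R(\sigma)_l\to\mathrm{Map}(\sigma,l)$ sending the class of an irreducible $\sigma$-representation $V$ to $\epsilon\circ\chi_V$ is an isomorphism, and it restricts to an isomorphism of $l$-algebras $$\widetilde{R}(\sigma)_l\xrightarrow{\ \simeq\ }\mathrm{Map}(\mathrm{gen}(\sigma),l),$$ where $\mathrm{Map}(\mathrm{gen}(\sigma),l)$ is identified with the functions on $\sigma$ vanishing outside $\mathrm{gen}(\sigma)$. These isomorphisms are compatible with the actions of $\mathrm{Aut}(\sigma)$.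
   Context: $R(\sigma)$ is the representation ring over $k$; $R(\sigma)_l:=R(\sigma)\otimes_{\mathbb{Z}}l$; $\chi_V$ is the character of $V$ (for irreducible $V$ it is a homomorphism $\sigma\to\mu_n(k)$). $\mathrm{gen}(\sigma)$ is the set of generators of $\sigma$ and $\mathrm{Map}(S,l)$ the $l$-algebra of functions $S\to l$. For a finite cyclic group $\rho$, $e_{\mathrm{prim}}:=\prod_{\rho'}(1-\frac1{|\rho'|}\sum_{h\in\rho'}h)\in\mathbb{Z}[1/n][\rho]$ over minimal nontrivial subgroups $\rho'$; $e_\sigma\in R(\sigma)_{1/n}$ is the idempotent corresponding to $e_{\mathrm{prim}}\in\mathbb{Z}[1/n][\sigma^\vee]$, $\sigma^\vee=\mathrm{Hom}(\sigma,k^\times)$, under the character isomorphism $R(\sigma)\simeq\mathbb{Z}[\sigma^\vee]$; $\widetilde{R}(\sigma)_l:=e_\sigma R(\sigma)_l$. $\mathrm{Aut}(\sigma)$ acts on $R(\sigma)_l$, on $\widetilde{R}(\sigma)_l$, and on functions on $\sigma$ by transport of structure. *)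

(* Defs.v *)
From HB Require Import structures.
From mathcomp Require Import all_boot all_order all_algebra all_fingroup all_solvable.
From mathcomp Require Import finmap.
From mathcomp Require Import boolp classical_sets functions cardinality fsbigop.
Set Implicit Arguments. Unset Strict Implicit. Unset Printing Implicit Defensive.
Import Order.TTheory GRing.Theory.
Local Open Scope classical_set_scope.
Local Open Scope ring_scope.

Section RepRing.
Variables (gT : finGroupType) (k l : fieldType).
Implicit Types (s : {set gT}) (chi psi : {ffun gT -> k}).

Definition is_kchar s chi : Prop :=
  [/\ forall x y, x \in s -> y \in s -> chi (x * y)%g = chi x * chi y,
      forall x, x \in s -> chi x != 0
    & forall x, x \notin s -> chi x = 0].

Definition kchars s : set {ffun gT -> k} := is_kchar s.

Definition chi1 s : {ffun gT -> k} := [ffun x => if x \in s then 1 else 0].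
Definition cmul chi psi : {ffun gT -> k} := [ffun x => chi x * psi x].
Definition cinv chi : {ffun gT -> k} := [ffun x => (chi x)^-1].

(* R(sigma)_l = l[sigma^vee] (via the character isomorphism R(sigma) = Z[sigma^vee]):
   l-valued functions on characters, zero off sigma^vee.  A basis element
   delta_chi is the class of the irreducible (1-dim.) representation with
   character chi. *)
Definition Rel s (c : {ffun gT -> k} -> l) : Prop :=
  forall chi, ~ is_kchar s chi -> c chi = 0.

Definition rdelta chi : {ffun gT -> k} -> l := fun psi => if psi == chi then 1 else 0.
Definition rone s := rdelta (chi1 s).
Definition rmul s (c d : {ffun gT -> k} -> l) : {ffun gT -> k} -> l :=
  fun chi => \sum_(psi \in kchars s) c psi * d (cmul chi (cinv psi)).

Definition is_dsubgroup s (H : set {ffun gT -> k}) : Prop :=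
  [/\ H `<=` kchars s, H (chi1 s) & forall a b, H a -> H b -> H (cmul a (cinv b))].
Definition min_dsubgroups s : set (set {ffun gT -> k}) :=
  fun H => [/\ is_dsubgroup s H, H <> [set chi1 s]
    & forall H', is_dsubgroup s H' -> H' `<=` H -> H' = [set chi1 s] \/ H' = H].

(* the factor 1 - (1/|rho'|) sum_{h in rho'} h, image in l[sigma^vee] *)
Definition efac s (H : set {ffun gT -> k}) : {ffun gT -> k} -> l :=
  fun chi => rone s chi -
    (if chi \in H then ((#|` fset_set H |)%fset%:R)^-1 else 0).

Definition esig s : {ffun gT -> k} -> l :=
  \big[rmul s / rone s]_(H \in min_dsubgroups s) efac s H.

(* the map R(sigma)_l -> Map(sigma, l), [V] |-> eps o chi_V; Map(sigma,l) is
   identified with functions gT -> l vanishing outside sigma *)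
Definition Phi s (eps : k -> l) (c : {ffun gT -> k} -> l) : gT -> l :=
  fun x => if x \in s then \sum_(psi \in kchars s) c psi * eps (psi x) else 0.

Definition act_char (a : {perm gT}) chi : {ffun gT -> k} := [ffun x => chi ((a^-1)%g x)].
Definition act_R (a : {perm gT}) (c : {ffun gT -> k} -> l) : {ffun gT -> k} -> l :=
  fun chi => c (act_char (a^-1)%g chi).
Definition act_map (a : {perm gT}) (f : gT -> l) : gT -> l := fun x => f ((a^-1)%g x).

End RepRing.

(* Main.v *)
Require Import Defs.
From HB Require Import structures.
From mathcomp Require Import all_boot all_order all_algebra all_fingroup all_solvable.
From mathcomp Require Import finmap.
From mathcomp Require Import boolp classical_sets functions cardinality fsbigop.
From mathcomp Require Import zify.
Set Implicit Arguments. Unset Strict Implicit. Unset Printing Implicit Defensive.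
Import Order.TTheory GRing.Theory.
Local Open Scope classical_set_scope.
Local Open Scope ring_scope.

Lemma pow_eq (R : pzRingType) (z : R) (N a b p q : nat) :
  z ^+ N = 1 -> (a + p * N = b + q * N)%N -> z ^+ a = z ^+ b.
Proof.
move=> hz E.
have h (c r : nat) : z ^+ (c + r * N) = z ^+ c.
  by rewrite exprD mulnC exprM hz expr1n mulr1.
by rewrite -(h a p) E h.
Qed.

Lemma sum_shift (R : zmodType) (N : nat) (F : nat -> R) :
  (forall t, F (t + N)%N = F t) -> forall s, \sum_(j < N) F (j + s)%N = \sum_(j < N) F j.
Proof.
move=> hF; elim=> [|s IH]; first by under eq_bigr do rewrite addn0.
rewrite -IH; under eq_bigr do rewrite addnS -addSn.
set G := fun j => F (j + s)%N.
have GN : G N = G 0%N by rewrite /G add0n addnC hF.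
have E1 : \sum_(0 <= i < N.+1) G i = G 0%N + \sum_(0 <= i < N) G i.+1.
  by rewrite big_nat_recl.
have E2 : \sum_(0 <= i < N.+1) G i = \sum_(0 <= i < N) G i + G N.
  by rewrite big_nat_recr.
rewrite E2 GN addrC in E1; move/addrI: E1.
by rewrite !big_mkord /G => <-.
Qed.

Lemma dvd_lemma (N i j : nat) : (i < N)%N -> (j < N)%N -> (N %| j + (N - i))%N = (j == i).
Proof.
move=> hi hj; case: (eqVneq j i) => [->|ne]; first by rewrite subnKC ?dvdnn // ltnW.
apply/negP => /dvdnP [q hq].
have : (q = 1)%N by nia.
move=> q1; rewrite q1 mul1n in hq; move/eqP: ne; lia.
Qed.

Section Main.
Set Default Proof Using "All".
Variables (gT : finGroupType) (k l : fieldType) (eps : k -> l) (n : nat).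
Variables (sigma : {group gT}) (g : gT) (w : k).
Hypothesis sig_g : (sigma : {set gT}) = <[g]>%g.
Local Notation m := #[g]%g.
Hypotheses (mn : (m %| n)%N) (nl : n%:R != 0 :> l) (prim_w : m.-primitive_root w).
Hypotheses (eps_root : forall x : k, x ^+ n = 1 -> eps x ^+ n = 1)
 (eps_mul : forall x y, x ^+ n = 1 -> y ^+ n = 1 -> eps (x * y) = eps x * eps y)
 (eps_inj : forall x y, x ^+ n = 1 -> y ^+ n = 1 -> eps x = eps y -> x = y).

Local Notation K := (@kchars gT k sigma).
Local Notation u := (eps w).

Lemma n_gt0 : (0 < n)%N.
Proof. by case: n nl => //; rewrite eqxx. Qed.

Lemma m_gt0 : (0 < m)%N. Proof. exact: order_gt0. Qed.

Lemma ml : m%:R != 0 :> l.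
Proof.
apply: contraNneq nl => h; rewrite -(divnK mn) natrM h mulr0 //.
Qed.

Lemma w_m : w ^+ m = 1. Proof. exact: prim_expr_order. Qed.

Lemma wpow_n e : (w ^+ e) ^+ n = 1.
Proof.
have : w ^+ n = 1 by apply/eqP; rewrite -(prim_order_dvd prim_w).
by move=> h; rewrite -exprM mulnC exprM h expr1n.
Qed.

Lemma one_n : (1 : k) ^+ n = 1. Proof. exact: expr1n. Qed.

Lemma eps1 : eps 1 = 1.
Proof.
have h := eps_mul one_n one_n; rewrite mulr1 in h.
have nz : eps 1 != 0.
  apply/negP => /eqP e0; have := eps_root one_n; rewrite e0 expr0n.
  by case: n n_gt0 => // n' _ /eqP; rewrite eq_sym oner_eq0.
by apply: (mulfI nz); rewrite -h mulr1.
Qed.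

Lemma epsw e : eps (w ^+ e) = u ^+ e.
Proof.
elim: e => [|e IH]; first by rewrite !expr0 eps1.
by rewrite !exprS eps_mul ?IH // -[w]expr1 wpow_n.
Qed.

Lemma u_dvd e : (u ^+ e == 1) = (m %| e)%N.
Proof.
rewrite (prim_order_dvd prim_w) -epsw; apply/eqP/eqP => [h|->]; last exact: eps1.
by apply: eps_inj; rewrite ?wpow_n ?one_n // h eps1.
Qed.

Lemma u_m : u ^+ m = 1. Proof. by apply/eqP; rewrite u_dvd. Qed.

Lemma ueq a b p q : (a + p * m = b + q * m)%N -> u ^+ a = u ^+ b.
Proof. exact: pow_eq u_m. Qed.
Lemma weq a b p q : (a + p * m = b + q * m)%N -> w ^+ a = w ^+ b.
Proof. exact: pow_eq w_m. Qed.

Lemma geo t : \sum_(j < m) u ^+ (j * t) = if (m %| t)%N then m%:R else 0.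
Proof.
under eq_bigr do rewrite mulnC exprM.
case: ifPn => [|nd].
  rewrite -u_dvd => /eqP ->; under eq_bigr do rewrite expr1n.
  by rewrite sumr_const card_ord.
have h := subrX1 (u ^+ t) m.
rewrite -exprM mulnC exprM u_m expr1n subrr in h.
apply/eqP; move/esym/eqP: h; rewrite mulf_eq0 subr_eq0 u_dvd (negbTE nd) /=.
by [].
Qed.

Definition idx (x : gT) := index x (mkseq (fun i => g ^+ i)%g m).

Lemma idxP x : x \in sigma -> (g ^+ idx x)%g = x /\ (idx x < m)%N.
Proof.
rewrite sig_g => /cyclePmin [i lim ->].
have hin : (g ^+ i)%g \in mkseq (fun i => g ^+ i)%g m.
  by apply/mapP; exists i => //; rewrite mem_iota.
have hlt : (idx (g ^+ i)%g < m)%N.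
  by rewrite /idx -[X in (_ < X)%N](size_mkseq (fun i => g ^+ i)%g m) index_mem.
split => //; have := nth_index 1%g hin; rewrite nth_mkseq //.
Qed.

Definition chi (j : nat) : {ffun gT -> k} :=
  [ffun x => if x \in sigma then w ^+ (j * idx x) else 0].

Lemma mem_g e : (g ^+ e)%g \in sigma.
Proof. by rewrite sig_g mem_cycle. Qed.

Lemma chi_g j e : chi j (g ^+ e)%g = w ^+ (j * e).
Proof.
rewrite ffunE mem_g; have [h1 _] := idxP (mem_g e).
have : (g ^+ idx (g ^+ e) == g ^+ e)%g by rewrite h1.
rewrite eq_expg_mod_order => /eqP he.
rewrite -(expr_mod _ w_m) -modnMmr he modnMmr expr_mod //; exact: w_m.
Qed.

Lemma w_neq0 : w != 0.
Proof.
apply/negP => /eqP w0; have := w_m; rewrite w0 expr0n.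
by case: (m) m_gt0 => // m' _ /eqP; rewrite eq_sym oner_eq0.
Qed.

Lemma chi_char j : is_kchar sigma (chi j).
Proof.
split.
- move=> x y hx hy; case: (idxP hx) => <- _; case: (idxP hy) => <- _.
  by rewrite -expgD !chi_g mulnDr exprD.
- move=> x hx; rewrite ffunE hx; exact: expf_neq0 w_neq0.
- by move=> x /negbTE hx; rewrite ffunE hx.
Qed.

Lemma char_chi psi : is_kchar sigma psi -> exists2 j, (j < m)%N & psi = chi j.
Proof.
case=> hmul hnz hout.
have p1 : psi 1%g = 1.
  have h := hmul 1%g 1%g (group1 _) (group1 _); rewrite mulg1 in h.
  by apply: (mulfI (hnz _ (group1 sigma))); rewrite -h mulr1.
have pe e : psi (g ^+ e)%g = psi g ^+ e.
  elim: e => [|e IH]; first by rewrite expg0 p1 expr0.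
  by rewrite expgS hmul ?IH ?exprS // -[g]expg1 mem_g.
have : psi g ^+ m = 1 by rewrite -pe expg_order.
case/(prim_rootP prim_w) => i hi; exists i => //.
apply/ffunP => x; case: (boolP (x \in sigma)) => hx; last first.
  by rewrite hout // ffunE (negbTE hx).
case: (idxP hx) => <- _; by rewrite pe chi_g hi -exprM.
Qed.

Lemma chi_inj i j : (i < m)%N -> (j < m)%N -> chi i = chi j -> i = j.
Proof.
move=> hi hj e; have := congr1 (fun f : {ffun gT -> k} => f (g ^+ 1)%g) e; rewrite /= !chi_g !muln1 => /eqP.
by rewrite (eq_prim_root_expr prim_w) !modn_small // => /eqP.
Qed.

Lemma chi_mul a b : cmul (chi a) (chi b) = chi (a + b).
Proof.
apply/ffunP => x; rewrite !ffunE; case: ifP => _; last by rewrite mulr0.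
by rewrite -exprD mulnDl.
Qed.

Lemma chi_div j i : (i <= m)%N -> cmul (chi j) (cinv (chi i)) = chi (j + (m - i)).
Proof.
move=> im; apply/ffunP => x; rewrite !ffunE; case: ifP => _; last by rewrite mul0r.
have nz : w ^+ (i * idx x) != 0 by exact: expf_neq0 w_neq0.
apply: (mulIf nz); rewrite mulrVK ?unitfE // -exprD.
apply: (weq (p := idx x) (q := 0)); nia.
Qed.

Lemma chi_per j : chi (j + m) = chi j.
Proof.
apply/ffunP => x; rewrite !ffunE; case: ifP => // _.
apply: (weq (p := 0) (q := idx x)); nia.
Qed.

Lemma chi1E : chi1 k sigma = chi 0.
Proof. by apply/ffunP => x; rewrite !ffunE. Qed.

Lemma K_eq : K = (fun j => chi j) @` `I_m.
Proof.
rewrite predeqE => psi; split.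
  by case/char_chi => j hj ->; exists j.
by case=> j _ <-; exact: chi_char.
Qed.

Lemma bigK (R : Type) (id : R) (op : Monoid.com_law id) (F : {ffun gT -> k} -> R) :
  \big[op/id]_(psi \in K) F psi = \big[op/id]_(j < m) F (chi j).
Proof.
rewrite K_eq fsbig_image; first by rewrite -fsbig_ord.
by move=> i j; rewrite !inE /= => hi hj; apply: chi_inj.
Qed.

Lemma PhiEg c e : Phi sigma eps c (g ^+ e)%g = \sum_(j < m) c (chi j) * u ^+ (j * e).
Proof.
rewrite /Phi mem_g bigK; apply: eq_bigr => j _; by rewrite chi_g epsw.
Qed.

Lemma PhiE0 c x : x \notin sigma -> Phi sigma eps c x = 0.
Proof. by rewrite /Phi => /negbTE ->. Qed.


Lemma Phi_rone : Phi sigma eps (rone l sigma) = (fun x => if x \in sigma then 1 else 0).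
Proof.
apply: funext => x; case: (boolP (x \in sigma)) => hx; last exact: PhiE0.
case: (idxP hx) => <- _; rewrite PhiEg /rone /rdelta chi1E.
rewrite (bigD1 (Ordinal m_gt0)) //= eqxx mul1r mul0n expr0 big1 ?addr0 // => j hj.
rewrite ifN ?mul0r //; apply/negP => /eqP /chi_inj h.
by move: hj; rewrite -val_eqE /= h ?eqxx // m_gt0.
Qed.

Lemma Phi_add c d : Phi sigma eps (fun chi => c chi + d chi)
   = (fun x => Phi sigma eps c x + Phi sigma eps d x).
Proof.
apply: funext => x; case: (boolP (x \in sigma)) => hx; last by rewrite !PhiE0 ?addr0.
rewrite /Phi hx !bigK -big_split /=; apply: eq_bigr => j _; exact: mulrDl.
Qed.

Lemma Phi_scale (a : l) c : Phi sigma eps (fun chi => a * c chi)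
   = (fun x => a * Phi sigma eps c x).
Proof.
apply: funext => x; case: (boolP (x \in sigma)) => hx; last by rewrite !PhiE0 ?mulr0.
rewrite /Phi hx !bigK mulr_sumr; apply: eq_bigr => j _; by rewrite mulrA.
Qed.

Lemma rmul_chi (c d : {ffun gT -> k} -> l) j : rmul sigma c d (chi j) =
  \sum_(i < m) c (chi i) * d (chi (j + (m - i))).
Proof. by rewrite /rmul bigK; apply: eq_bigr => i _; rewrite chi_div // ltnW. Qed.

Lemma Phi_mul c d : Phi sigma eps (rmul sigma c d)
   = (fun x => Phi sigma eps c x * Phi sigma eps d x).
Proof.
apply: funext => x; case: (boolP (x \in sigma)) => hx; last by rewrite !PhiE0 ?mulr0.
case: (idxP hx) => <- _; set e := idx x.
rewrite !PhiEg; under eq_bigr do rewrite rmul_chi mulr_suml.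
rewrite exchange_big mulr_suml; apply: eq_bigr => i _ /=.
transitivity (\sum_(j < m) c (chi i) * u ^+ (i * e) *
   (d (chi (j + (m - i))) * u ^+ ((j + (m - i)) * e))).
  apply: eq_bigr => j _; rewrite [RHS]mulrACA -exprD; congr (_ * _).
  have hi := ltn_ord i; apply: (ueq (p := e) (q := 0)).
  by rewrite mul0n addn0 -mulnDl addnCA subnKC ?(ltnW hi) // mulnDl; congr (_ + _); exact: mulnC.
rewrite -mulr_sumr; congr (_ * _).
pose F t := d (chi t) * u ^+ (t * e).
have hF t : F (t + m)%N = F t.
  by rewrite /F chi_per; congr (_ * _); apply: (ueq (p := 0) (q := e)); rewrite mul0n addn0 mulnDl; congr (_ + _); exact: mulnC.
exact: (sum_shift hF).
Qed.

Lemma Phi_inv c (i : 'I_m) :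
  \sum_(e < m) Phi sigma eps c (g ^+ e)%g * u ^+ ((m - i) * e) = m%:R * c (chi i).
Proof.
under eq_bigr do rewrite PhiEg mulr_suml.
rewrite exchange_big /=.
transitivity (\sum_(j < m) c (chi j) * \sum_(e < m) u ^+ (e * (j + (m - i)))).
  apply: eq_bigr => j _; rewrite mulr_sumr; apply: eq_bigr => e _.
  by rewrite -mulrA -exprD -mulnDl (mulnC e).
under eq_bigr do rewrite geo.
rewrite (bigD1 i) // dvd_lemma // eqxx big1; first by rewrite Monoid.mulm1 mulrC.
by move=> j /= hj; rewrite dvd_lemma // val_eqE (negbTE hj) mulr0.
Qed.

Lemma Phi_inj c d : Rel sigma c -> Rel sigma d -> Phi sigma eps c = Phi sigma eps d -> c = d.
Proof.
move=> Rc Rd E; apply: funext => psi.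
case: (pselect (is_kchar sigma psi)) => hp; last by rewrite Rc ?Rd.
case/char_chi: hp => j hj ->.
have h1 := Phi_inv c (Ordinal hj); have h2 := Phi_inv d (Ordinal hj).
apply: (mulfI ml); rewrite -h1 -h2 E //.
Qed.

Lemma Phi_surj f : (forall x, x \notin sigma -> f x = 0) ->
  exists2 c, Rel sigma c & Phi sigma eps c = f.
Proof.
move=> hf.
pose a (i : nat) := m%:R^-1 * \sum_(e < m) f (g ^+ e)%g * u ^+ ((m - i) * e).
pose c psi := \sum_(i < m) (if psi == chi i then a i else 0).
have ca (j : nat) : (j < m)%N -> c (chi j) = a j.
  move=> hj; rewrite /c (bigD1 (Ordinal hj)) //= eqxx big1 ?addr0 // => i hi.
  rewrite ifN //; apply/negP => /eqP /chi_inj h.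
  by move: hi; rewrite -val_eqE /= h ?eqxx.
exists c.
  move=> psi hp; apply: big1 => i _; rewrite ifN //; apply/negP => /eqP he.
  by apply: hp; rewrite he; exact: chi_char.
apply: funext => x; case: (boolP (x \in sigma)) => hx; last by rewrite PhiE0 ?hf.
have [hxe e0m] := idxP hx; rewrite -hxe; move: (idx x) e0m => e0 e0m.
rewrite PhiEg.
transitivity (m%:R^-1 * \sum_(e < m) f (g ^+ e)%g * \sum_(j < m) u ^+ (j * (e0 + (m - e)))).
  under eq_bigr do rewrite ca // /a -mulrA mulr_suml.
  rewrite -mulr_sumr; congr (_ * _).
  rewrite exchange_big /=; apply: eq_bigr => e _; rewrite mulr_sumr.
  apply: eq_bigr => j _; rewrite -mulrA -exprD; congr (_ * _).
  have hj := ltn_ord j; have he := ltn_ord e.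
  apply: (ueq (p := j) (q := e)); rewrite mulnBl mulnDr mulnBr.
  have h1 : (j * e <= m * e)%N by rewrite leq_mul // ltnW.
  have h2 : (j * e <= j * m)%N by rewrite leq_mul // ltnW.
  rewrite (mulnC e); lia.
under eq_bigr do rewrite geo.
rewrite (bigD1 (Ordinal e0m)) // dvd_lemma // eqxx big1.
  by rewrite Monoid.mulm1 mulrA mulrC mulrA mulfV ?mul1r // ml.
move=> j /= hj; rewrite dvd_lemma // ifN ?mulr0 //.
by rewrite eq_sym; exact: hj.
Qed.


Lemma act_K (b : {perm gT}) psi : b \in Aut sigma -> K psi -> K [ffun y => psi (b y)].
Proof.
move=> hb [hm hnz hout]; split.
- move=> x y hx hy; rewrite !ffunE (morphicP (Aut_morphic hb)) //.
  by rewrite hm ?Aut_closed.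
- by move=> x hx; rewrite ffunE hnz ?Aut_closed.
- by move=> x hx; rewrite ffunE (out_Aut hb hx) hout.
Qed.

Lemma Phi_act (a : {perm gT}) c : a \in Aut sigma ->
  Phi sigma eps (act_R a c) = act_map a (Phi sigma eps c).
Proof.
move=> ha; have hai : (a^-1)%g \in Aut sigma by rewrite groupV.
apply: funext => x; rewrite /act_map /Phi.
have -> : ((a^-1)%g x \in sigma) = (x \in sigma).
  apply/idP/idP => h; last exact: Aut_closed.
  by rewrite -(permKV a x); apply: Aut_closed.
case: ifP => // hx.
pose h (psi : {ffun gT -> k}) := act_char (a^-1)%g psi.
have hbij : set_bij K K h.
  split.
  - move=> psi hp; rewrite /h /act_char.
    have -> : [ffun x => psi ((a^-1)^-1 x)%g] = [ffun x => psi (a x)].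
      by apply/ffunP => y; rewrite !ffunE invgK.
    exact: act_K.
  - move=> p q _ _ E; apply/ffunP => y.
    have := congr1 (fun f : {ffun gT -> k} => f ((a^-1)%g y)) E.
    by rewrite /= !ffunE invgK permKV.
  - move=> q hq; exists (act_char a q).
      exact: act_K.
    by apply/ffunP => y; rewrite /h !ffunE invgK permK.
rewrite [RHS](reindex_fsbig h K K) //; apply: eq_fsbigr => psi _.
by rewrite /act_R /h /act_char ffunE invgK permKV.
Qed.


Local Notation chi1s := (chi1 k sigma).
Implicit Types (H : set {ffun gT -> k}) (psi p q : {ffun gT -> k}).

Lemma chi1_char : K chi1s.
Proof. rewrite chi1E; exact: chi_char. Qed.

Lemma dsub_mul H p q : is_dsubgroup sigma H -> H p -> H q -> H (cmul p q).
Proof.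
case=> hK h1 hc hp hq.
have eq1 : cinv q = cmul chi1s (cinv q).
  apply/ffunP => x; rewrite !ffunE; case: ifP => hx; first by rewrite mul1r.
  by case: (hK _ hq) => _ _ /(_ x); rewrite hx => ->; rewrite // invr0 mul0r.
have hiq : H (cinv q) by rewrite eq1; exact: hc.
have -> : cmul p q = cmul p (cinv (cinv q)).
  by apply/ffunP => x; rewrite !ffunE invrK.
exact: hc.
Qed.

Lemma dsubK H : is_dsubgroup sigma H -> H `<=` K.
Proof. by case. Qed.

Lemma chi_mod t : chi (t %% m)%N = chi t.
Proof.
have h (a b : nat) : chi (a * m + b)%N = chi b.
  elim: a => [|a IH]; first by rewrite mul0n add0n.
  by rewrite mulSn -addnA addnC chi_per.
by have := h (t %/ m)%N (t %% m)%N; rewrite -divn_eq => <-.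
Qed.

Lemma chi_in_shift H j j0 : is_dsubgroup sigma H -> (j0 < m)%N -> H (chi j0) ->
  (chi (j + j0) \in H) = (chi j \in H).
Proof.
move=> hs hj0 h0; apply/idP/idP => h.
  case: hs => _ _ hc.
  have := hc _ _ (set_mem h) h0; rewrite chi_div; last exact: ltnW.
  rewrite -addnA subnKC; last exact: ltnW.
  by rewrite chi_per => /mem_set.
by apply: mem_set; rewrite -chi_mul; apply: dsub_mul => //; exact: set_mem.
Qed.

Lemma K_fin : finite_set K.
Proof. by rewrite K_eq; apply: finite_image; exact: finite_II. Qed.

Lemma card_H H : H `<=` K ->
  (\sum_(j < m) (if chi j \in H then 1 else 0))%N = #|`fset_set H|.
Proof.
move=> hK.
rewrite -(bigK addn (fun psi => if psi \in H then 1 else 0)%N).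
rewrite -(fsbig_widen H K) //; last first.
  by move=> psi [_ hn] /=; rewrite memNset.
rewrite (eq_fsbigr (fun _ => 1%N)); last by move=> psi ->.
rewrite fsbig_finite ?card_fset_sum1 //.
exact: sub_finite_set hK K_fin.
Qed.

Lemma card_H_dvd H : is_dsubgroup sigma H -> (#|`fset_set H| %| m)%N.
Proof.
move=> hs; have hK := (dsubK hs).
set J := [set j : 'I_m | chi j \in H]%SET.
have cJ : #|`fset_set H| = #|J|.
  rewrite -card_H // -sum1_card [RHS]big_mkcond /=; apply: eq_bigr => j _.
  by rewrite inE.
pose T := [set (g ^+ (val j))%g | j in J]%SET.
have cT : #|T| = #|J|.
  apply: card_in_imset => i j _ _ /eqP; rewrite eq_expg_mod_order.
  by rewrite !modn_small ?ltn_ord // => /eqP /val_inj.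
have gT_ : group_set T.
  apply/group_setP; split.
    apply/imsetP; exists (Ordinal m_gt0) => //; rewrite inE /= -chi1E.
    by apply: mem_set; case: hs.
  move=> _ _ /imsetP [a ha ->] /imsetP [b hb ->].
  apply/imsetP; exists (Ordinal (ltn_pmod (a + b) m_gt0)) => /=.
    rewrite inE /= chi_mod -chi_mul; apply: mem_set; apply: dsub_mul => //.
      by move: ha; rewrite inE => /set_mem.
    by move: hb; rewrite inE => /set_mem.
  by rewrite expg_mod_order expgD.
have sT : T \subset sigma by apply/fintype.subsetP => _ /imsetP [j _ ->]; exact: mem_g.
have := @cardSg _ sigma (Group gT_) sT.
by rewrite /= cT sig_g -cJ.
Qed.

Lemma cardH_neq0 H : is_dsubgroup sigma H -> (#|`fset_set H|)%:R != 0 :> l.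
Proof.
move=> /card_H_dvd hd; apply: contraNneq ml => h.
by rewrite -(divnK hd) natrM h mulr0.
Qed.

Lemma Phi_efac_S H e : Phi sigma eps (efac l sigma H) (g ^+ e)%g =
  1 - (#|`fset_set H|%:R)^-1 * \sum_(j < m) (if chi j \in H then u ^+ (j * e) else 0).
Proof.
rewrite PhiEg /efac; under eq_bigr do rewrite mulrBl.
rewrite sumrB -(PhiEg (rone l sigma)) Phi_rone mem_g mulr_sumr; congr (_ - _).
by apply: eq_bigr => j _; case: ifP; rewrite ?mul0r ?mulr0.
Qed.

Lemma Phi_efac0 H e : is_dsubgroup sigma H ->
  (forall psi, H psi -> psi (g ^+ e)%g = 1) -> Phi sigma eps (efac l sigma H) (g ^+ e)%g = 0.
Proof.
move=> hs hall; rewrite Phi_efac_S.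
have -> : \sum_(j < m) (if chi j \in H then u ^+ (j * e) else 0)
    = (#|`fset_set H|)%:R.
  rewrite -card_H; last exact: (dsubK hs).
  rewrite (big_morph _ (natrD _) (mulr0n _)); apply: eq_bigr => j _.
  case: ifP => // /set_mem /hall; rewrite chi_g => h.
  by rewrite -epsw h eps1.
by rewrite mulVf ?subrr // cardH_neq0.
Qed.

Lemma Phi_efac1 H e : is_dsubgroup sigma H ->
  (exists2 psi, H psi & psi (g ^+ e)%g != 1) ->
  Phi sigma eps (efac l sigma H) (g ^+ e)%g = 1.
Proof.
move=> hs [psi hp hne]; rewrite Phi_efac_S.
case: (char_chi ((dsubK hs) _ hp)) => j0 hj0 epsi; rewrite epsi in hp hne.
pose T t := if chi t \in H then u ^+ (t * e) else 0.
set v := u ^+ (j0 * e).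
have hv : v != 1.
  apply: contraNneq hne => hv1; rewrite chi_g; apply/eqP; apply: eps_inj.
  - exact: wpow_n.
  - exact: one_n.
  by rewrite epsw -/v hv1 eps1.
have hT t : T (t + m)%N = T t.
  rewrite /T chi_per; case: ifP => // _; apply: (ueq (p := 0) (q := e)).
  by rewrite mul0n addn0 mulnDl; congr (_ + _); exact: mulnC.
have hS : \sum_(j < m) T (j + j0)%N = (\sum_(j < m) T j) * v.
  rewrite mulr_suml; apply: eq_bigr => j _; rewrite /T chi_in_shift //.
  by case: ifP; rewrite ?mul0r // /v -exprD mulnDl.
rewrite (sum_shift hT) in hS.
have S0 : \sum_(j < m) T j = 0.
  move/eqP: hS; rewrite -{1}[\sum_(j < m) T j]mulr1 -subr_eq0 -mulrBr mulf_eq0.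
  by rewrite subr_eq0 [1 == _]eq_sym (negbTE hv) orbF => /eqP.
by rewrite /T in S0; rewrite S0 mulr0 subr0.
Qed.


Lemma Phi_big (r : seq (set {ffun gT -> k})) (F : set {ffun gT -> k} -> ({ffun gT -> k} -> l)) x :
  x \in sigma ->
  Phi sigma eps (\big[rmul sigma/rone l sigma]_(H <- r) F H) x = \prod_(H <- r) Phi sigma eps (F H) x.
Proof.
move=> hx; elim: r => [|H r IH]; first by rewrite !big_nil Phi_rone hx.
by rewrite !big_cons Phi_mul IH.
Qed.

Lemma min_fin : finite_set (@min_dsubgroups gT k sigma).
Proof.
pose Fs (J : {set 'I_m}) : set {ffun gT -> k} := (fun j : 'I_m => chi j) @` [set j | j \in J].
apply: (@sub_finite_set _ _ (Fs @` setT)); last exact: finite_image finite_finset.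
move=> H [hs _ _]; exists [set j : 'I_m | chi j \in H]%SET => //.
rewrite /Fs predeqE => psi; split.
  by case=> j /= hj <-; move: hj; rewrite inE => /set_mem.
move=> hp; case: (char_chi (dsubK hs hp)) => j hj epsi.
exists (Ordinal hj) => //=; rewrite inE; apply: mem_set; by rewrite /= -epsi.
Qed.

Lemma char_pow psi x i : K psi -> x \in sigma -> psi (x ^+ i)%g = psi x ^+ i.
Proof.
case=> hm hnz hout hx.
have p1 : psi 1%g = 1.
  have h := hm 1%g 1%g (group1 _) (group1 _); rewrite mulg1 in h.
  by apply: (mulfI (hnz _ (group1 sigma))); rewrite -h mulr1.
elim: i => [|i IH]; first by rewrite expg0 p1 expr0.
by rewrite expgS hm ?IH ?exprS // groupX.
Qed.

Lemma triv_gen psi x : generator sigma x -> K psi -> psi x = 1 -> psi = chi1s.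
Proof.
move=> /eqP gen hp px1; have hx : x \in sigma by rewrite gen cycle_id.
apply/ffunP => y; rewrite ffunE; case: ifPn => hy; last by case: hp => _ _ ->.
move: (hy); rewrite gen => /cycleP [i ->].
by rewrite char_pow // px1 expr1n.
Qed.

Lemma gen_sep x H : generator sigma x -> @min_dsubgroups gT k sigma H ->
  exists2 psi, H psi & psi x != 1.
Proof.
move=> gen [hs hne _].
case: (pselect (exists2 psi, H psi & psi x != 1)) => // hn; exfalso; apply: hne.
rewrite predeqE => psi; split.
  move=> hp; apply: (triv_gen gen (dsubK hs hp)).
  by apply/eqP; apply: contra_notT hn => h; exists psi.
by move=> ->; case: hs.
Qed.

Lemma nonmin_step H : is_dsubgroup sigma H ->
  ~ (forall H'', is_dsubgroup sigma H'' -> H'' `<=` H -> H'' = [set chi1s] \/ H'' = H) ->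
  exists H1, [/\ is_dsubgroup sigma H1, H1 `<=` H, H1 <> [set chi1s] &
    ([set j : 'I_m | chi j \in H1]%SET \proper [set j : 'I_m | chi j \in H]%SET)].
Proof.
move=> hs hall.
have [H1 [h1 h2 h3]] : exists H1, [/\ is_dsubgroup sigma H1, H1 `<=` H &
     ~ (H1 = [set chi1s] \/ H1 = H)].
  case: (pselect (exists H1, [/\ is_dsubgroup sigma H1, H1 `<=` H &
     ~ (H1 = [set chi1s] \/ H1 = H)])) => // hn; exfalso; apply: hall => H1 d1 s1.
  case: (pselect (H1 = [set chi1s] \/ H1 = H)) => // ne; exfalso; apply: hn.
  by exists H1; split.
exists H1; split => //; first by move=> e; apply: h3; left.
apply/properP; split.
  by apply/fintype.subsetP => j; rewrite !inE => /h2.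
case: (pselect (exists2 psi, H psi & ~ H1 psi)) => [[psi hp hn1]|hn].
  case: (char_chi (dsubK hs hp)) => j hj epsi; exists (Ordinal hj).
    by rewrite inE /=; apply: mem_set; rewrite -epsi.
  by rewrite inE /= -epsi; apply/negP => /set_mem.
exfalso; apply: h3; right; rewrite predeqE => psi; split; first exact: h2.
move=> hp; case: (pselect (H1 psi)) => // hn1; exfalso; apply: hn; by exists psi.
Qed.

Lemma exists_min H : is_dsubgroup sigma H -> H <> [set chi1s] ->
  exists H0, @min_dsubgroups gT k sigma H0 /\ H0 `<=` H.
Proof.
suff: forall N H, (#|[set j : 'I_m | chi j \in H]%SET| <= N)%N -> is_dsubgroup sigma H ->
    H <> [set chi1s] -> exists H0, @min_dsubgroups gT k sigma H0 /\ H0 `<=` H.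
  by move=> /(_ _ H (leqnn _)); apply.
elim=> [|N IH] H' hN hs hne;
  (case: (pselect (forall H'', is_dsubgroup sigma H'' -> H'' `<=` H' ->
     H'' = [set chi1s] \/ H'' = H')) => hall; first by exists H'; split);
  have [H1 [h1 h2 h3 hpr]] := nonmin_step hs hall; have hc := proper_card hpr.
  by move: (leq_trans hc hN).
have [H0 [hm hs0]] : exists H0, @min_dsubgroups gT k sigma H0 /\ H0 `<=` H1.
  by apply: IH => //; rewrite -ltnS (leq_trans hc hN).
by exists H0; split => // psi /hs0 /h2.
Qed.

Lemma Ann_min x : x \in sigma -> ~~ generator sigma x ->
  exists H0, @min_dsubgroups gT k sigma H0 /\ (forall psi, H0 psi -> psi x = 1).
Proof.
move=> hx ngen.
pose Ann : set {ffun gT -> k} := [set psi | K psi /\ psi x = 1].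
have hs : is_dsubgroup sigma Ann.
  split.
  - by move=> psi [].
  - by split; [exact: chi1_char | rewrite ffunE hx].
  - move=> a b [Ka ax] [Kb bx]; split; last by rewrite !ffunE ax bx invr1 mulr1.
    case/char_chi: Ka => i hi ->; case/char_chi: Kb => j hj ->.
    rewrite chi_div; [exact: chi_char | exact: ltnW].
set d := #[x]%g.
have hsub : (<[x]> \subset sigma)%g by rewrite cycle_subG.
have hdm : (d < m)%N.
  have : (d <= #|sigma|)%N by exact: subset_leq_card.
  rewrite sig_g leq_eqVlt => /orP [/eqP hd|//].
  exfalso; move/negP: ngen; apply; rewrite /generator eq_sym eqEcard hsub /=.
  by rewrite sig_g -hd.
have hd0 : (0 < d)%N := order_gt0 x.
have hAd : Ann (chi d).
  split; first exact: chi_char.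
  have [hxe _] := idxP hx; rewrite -hxe chi_g; apply/eqP.
  rewrite -(prim_order_dvd prim_w) order_dvdn mulnC expgM hxe; apply/eqP.
  exact: expg_order.
have hne : Ann <> [set chi1s].
  move=> E; have : Ann (chi d) by [].
  rewrite E /= chi1E => /chi_inj h.
  by move: hd0; rewrite h.
have [H0 [hm hsub0]] := exists_min hs hne.
by exists H0; split => // psi /hsub0 [].
Qed.

Lemma efac_neq H : is_dsubgroup sigma H -> efac l sigma H <> rone l sigma.
Proof.
move=> hs E; have := congr1 (fun f => f chi1s) E.
have h1 : chi1s \in H by apply: mem_set; case: hs.
rewrite /efac /rone /rdelta eqxx h1 /= => /eqP.
rewrite -subr_eq0 addrC addKr oppr_eq0 invr_eq0.
by rewrite (negbTE (cardH_neq0 hs)).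
Qed.

Lemma gen_mem x : generator sigma x -> x \in sigma.
Proof. by move=> /eqP ->; exact: cycle_id. Qed.

Lemma Phi_esig : Phi sigma eps (esig l sigma) = (fun x => if generator sigma x then 1 else 0).
Proof.
apply: funext => x; case: (boolP (x \in sigma)) => hx; last first.
  by rewrite PhiE0 //; case: ifPn => // /gen_mem; rewrite (negbTE hx).
have finS : finite_set (@min_dsubgroups gT k sigma `&`
    (fun i => efac l sigma i) @^-1` [set~ rone l sigma]).
  exact: sub_finite_set (@subIsetl _ _ _) min_fin.
rewrite /esig Phi_big //.
have [hxe _] := idxP hx.
case: ifPn => gen.
  apply: big1_seq => H /andP [_].
  rewrite (in_finite_support finS) => /set_mem [hmin _].
  rewrite -hxe; apply: Phi_efac1; first by case: hmin.
  rewrite hxe; exact: gen_sep.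
have [H0 [hmin hann]] := Ann_min hx gen.
apply/eqP; rewrite prodf_seq_eq0; apply/hasP; exists H0.
  rewrite (in_finite_support finS); apply: mem_set; split => //.
  by apply: efac_neq; case: hmin.
rewrite /= -hxe Phi_efac0 //; first by case: hmin.
by move=> psi /hann; rewrite hxe.
Qed.

End Main.

Theorem proposition4p6 (gT : finGroupType) (G sigma : {group gT})
    (k l : fieldType) (eps : k -> l) :
  (#|G|%:R != 0 :> k) -> (exists z : k, #|G|.-primitive_root z) ->
  (#|G|%:R != 0 :> l) -> (exists z : l, #|G|.-primitive_root z) ->
  (* eps : mu_n(k) -> mu_n(l) is a group isomorphism *)
  (forall x : k, x ^+ #|G| = 1 -> eps x ^+ #|G| = 1) ->
  (forall x y : k, x ^+ #|G| = 1 -> y ^+ #|G| = 1 -> eps (x * y) = eps x * eps y) ->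
  (forall x y : k, x ^+ #|G| = 1 -> y ^+ #|G| = 1 -> eps x = eps y -> x = y) ->
  (forall z : l, z ^+ #|G| = 1 -> exists2 x : k, x ^+ #|G| = 1 & eps x = z) ->
  sigma \subset G -> cyclic sigma ->
  (* Phi : R(sigma)_l -> Map(sigma,l) is an l-algebra homomorphism ... *)
  (Phi sigma eps (rone l sigma) = (fun x => if x \in sigma then 1 else 0)
   /\ (forall c d, Rel sigma c -> Rel sigma d ->
         Phi sigma eps (fun chi => c chi + d chi)
         = (fun x => Phi sigma eps c x + Phi sigma eps d x))
   /\ (forall (a : l) c, Rel sigma c ->
         Phi sigma eps (fun chi => a * c chi) = (fun x => a * Phi sigma eps c x))
   /\ (forall c d, Rel sigma c -> Rel sigma d ->
         Phi sigma eps (rmul sigma c d)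
         = (fun x => Phi sigma eps c x * Phi sigma eps d x))
   (* ... which is bijective *)
   /\ (forall c d, Rel sigma c -> Rel sigma d -> Phi sigma eps c = Phi sigma eps d -> c = d)
   /\ (forall f : gT -> l, (forall x, x \notin sigma -> f x = 0) ->
         exists2 c, Rel sigma c & Phi sigma eps c = f))
  (* restriction: e_sigma R(sigma)_l ~= Map(gen(sigma), l) as l-algebras *)
  /\ (Phi sigma eps (esig l sigma) = (fun x => if generator sigma x then 1 else 0)
   /\ (forall f : gT -> l,
         (exists2 c, Rel sigma c & Phi sigma eps (rmul sigma (esig l sigma) c) = f)
         <-> (forall x, ~~ generator sigma x -> f x = 0)))
  (* compatibility with Aut(sigma) *)
  /\ (forall (a : {perm gT}) c, a \in Aut sigma -> Rel sigma c ->
        Phi sigma eps (act_R a c) = act_map a (Phi sigma eps c)).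
Proof.
move=> nk [z zp] nl' [zl _] eroot emul einj esurj sG cyc.
have [g sg] := cyclicP cyc.
have mn : (#[g]%g %| #|G|)%N by rewrite /order -sg; exact: cardSg.
have pw := dvdn_prim_root zp mn.
have P1 := @Phi_rone gT k l eps _ sigma g _ sg mn nl' pw eroot emul einj.
have P2 := @Phi_add gT k l eps _ sigma g _ sg mn nl' pw eroot emul einj.
have P3 := @Phi_scale gT k l eps _ sigma g _ sg mn nl' pw eroot emul einj.
have P4 := @Phi_mul gT k l eps _ sigma g _ sg mn nl' pw eroot emul einj.
have P5 := @Phi_inj gT k l eps _ sigma g _ sg mn nl' pw eroot emul einj.
have P6 := @Phi_surj gT k l eps _ sigma g _ sg mn nl' pw eroot emul einj.
have P7 := @Phi_esig gT k l eps _ sigma g _ sg mn nl' pw eroot emul einj.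
have P8 := @Phi_act gT k l eps _ sigma g _ sg mn nl' pw eroot emul einj.
have gm x : generator sigma x -> x \in sigma by move=> /eqP ->; exact: cycle_id.
split.
  split; first exact: P1.
  split; first by move=> c d _ _; exact: P2.
  split; first by move=> a c _; exact: P3.
  split; first by move=> c d _ _; exact: P4.
  split; first exact: P5.
  exact: P6.
split; last by move=> a c ha _; exact: P8.
split => // f; split.
  move=> [c _ <-] x ngen; rewrite P4 P7 /=.
  by rewrite (negbTE ngen) mul0r.
move=> hf.
have [c Rc E] : exists2 c, Rel sigma c & Phi sigma eps c = f.
  apply: P6 => x hx; apply: hf; apply/negP => /gm; by rewrite (negbTE hx).
exists c => //; apply: funext => x; rewrite P4 P7 E /=.
by case: ifPn => gx; [rewrite mul1r | rewrite hf // mul0r].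
Qed.
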